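(* Let $k\ge 1$ and let $L=(l_1,\ldots,l_k)$ be a sequence of positive integers in spider order, and let $S=S(L)$ be the spider defined by $L$. Let $t$ be an integer with $1\le t\le \alpha(S)$. Then for each $1\le i<j\le k$ we have $$|\mathcal{I}^t_{v_{i,l_i}}(S)|\ge |\mathcal{I}^t_{v_{j,l_j}}(S)|.$$
   Context: For a graph $G$, $\alpha(G)$ is the maximum size of an independent set in $G$, and for an integer $t\le\alpha(G)$, $\mathcal{I}^t(G)$ denotes the family of all independent sets of $G$ of size $t$. For a vertex $x$, $\mathcal{I}^t_x(G)$ denotes the subfamily of sets in $\mathcal{I}^t(G)$ containing $x$ (the star centered at $x$). Given a sequence of positive integers $L=(l_1,\ldots,l_k)$, the spider $S(L)$ is the tree consisting of a head vertex $v_0$ and, for each $1\le i\le k$, a leg which is the path $v_0,v_{i,1},v_{i,2},\ldots,v_{i,l_i}$; distinct legs share only $v_0$. The sequence $L$ is in spider order if: (1) whenever $l_i$ and $l_j$ are both odd and $l_i<l_j$, then $i<j$; (2) whenever $l_i$ and $l_j$ are both even and $l_i<l_j$, then $i>j$; (3) whenever $l_i$ is odd and $l_j$ is even, then $i<j$. *)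

(* Defs.v *)
From mathcomp Require Import all_boot.
Set Implicit Arguments. Unset Strict Implicit. Unset Printing Implicit Defensive.

Section Spider.
Variables (k : nat) (l : 'I_k -> nat).

(* Vertices of the spider S(L): None is the head v_0;
   Some (Tagged _ p) with i = tag, p = tagged : 'I_(l i) is the leg vertex v_{i,p+1}
   (legs and positions are 0-indexed: leg i here is leg i+1 of the paper). *)
Definition spider_vertex := option {i : 'I_k & 'I_(l i)}.

Definition spider_adj (x y : spider_vertex) : bool :=
  match x, y with
  | None, None => false
  | None, Some u => val (tagged u) == 0
  | Some u, None => val (tagged u) == 0
  | Some u, Some w =>
      (tag u == tag w) &&
      (((val (tagged u)).+1 == val (tagged w)) || ((val (tagged w)).+1 == val (tagged u)))
  end.

Definition independent (A : {set spider_vertex}) : bool :=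
  [forall x in A, forall y in A, ~~ spider_adj x y].

Definition spider_alpha : nat :=
  \max_(A : {set spider_vertex} | independent A) #|A|.

Definition istar (t : nat) (x : spider_vertex) : {set {set spider_vertex}} :=
  [set A : {set spider_vertex} | [&& independent A, #|A| == t & x \in A]].

Lemma pred_lt n : 0 < n -> n.-1 < n.
Proof. by case: n. Qed.

Definition leaf (i : 'I_k) (hi : 0 < l i) : spider_vertex :=
  Some (Tagged (fun j => 'I_(l j)) (Ordinal (pred_lt hi))).

Definition spider_order : Prop :=
  forall i j : 'I_k,
    [/\ (odd (l i) -> odd (l j) -> l i < l j -> i < j),
        (~~ odd (l i) -> ~~ odd (l j) -> l i < l j -> j < i)
      & (odd (l i) -> ~~ odd (l j) -> i < j)].

End Spider.

(* Main.v *)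
Require Import Defs.
From mathcomp Require Import all_boot all_order all_algebra.
From mathcomp Require Import ring zify.
Import GRing.Theory Num.Theory.
Set Implicit Arguments. Unset Strict Implicit. Unset Printing Implicit Defensive.
Open Scope ring_scope.

Fixpoint Fp (n : nat) : {poly int} :=
  match n with
  | 0 => 0
  | m.+1 => match m with 0 => 1 | k.+1 => Fp m + 'X * Fp k end
  end.

Lemma FpS2 n : Fp n.+2 = Fp n.+1 + 'X * Fp n. Proof. by []. Qed.
Lemma Fp0 : Fp 0 = 0. Proof. by []. Qed.
Lemma Fp1 : Fp 1 = 1. Proof. by []. Qed.
Arguments Fp : simpl never.

Lemma cassini m d : Fp m * Fp (m + d).+1 - Fp m.+1 * Fp (m + d) = - ((- 'X) ^+ m * Fp d).
Proof.
elim: m => [|m IH]; first by rewrite add0n Fp0 Fp1; ring.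
rewrite addSn !FpS2.
apply/eqP; rewrite -subr_eq0.
have -> : Fp m.+1 * (Fp (m + d).+1 + 'X * Fp (m + d)) - (Fp m.+1 + 'X * Fp m) * Fp (m + d).+1 -
  - ((- 'X) ^+ m.+1 * Fp d) = - 'X * ((Fp m * Fp (m + d).+1 - Fp m.+1 * Fp (m + d)) - - ((- 'X) ^+ m * Fp d)).
  by rewrite exprS; ring.
by rewrite IH subrr mulr0.
Qed.

Lemma diff_id (O N : {poly int}) a' d :
  let a := a'.+1 in let b := (a + d)%N in
  (O * ('X * Fp a) * Fp b.+2 + N * ('X * Fp a.-1) * Fp b.+1) -
  (O * ('X * Fp b) * Fp a.+2 + N * ('X * Fp b.-1) * Fp a.+1)
  = 'X * (- 'X) ^+ a' * Fp d * ('X * O - N).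
Proof.
move=> a b.
have h2 := cassini a' d.
rewrite /b /a addSn /=.
transitivity ('X * (N - 'X * O) * (Fp a' * Fp (a' + d).+1 - Fp a'.+1 * Fp (a' + d))).
  rewrite !FpS2; ring.
rewrite h2; ring.
Qed.

Definition nng (p : {poly int}) := forall n, 0 <= p`_n.

Lemma nngD p q : nng p -> nng q -> nng (p + q).
Proof. by move=> hp hq n; rewrite coefD addr_ge0. Qed.

Lemma nngM p q : nng p -> nng q -> nng (p * q).
Proof.
move=> hp hq n; rewrite coefM; apply: sumr_ge0 => i _; exact: mulr_ge0.
Qed.

Lemma nngX : nng 'X.
Proof. by move=> n; rewrite coefX; case: (n == 1)%N. Qed.

Lemma nng1 : nng 1.
Proof. by move=> n; rewrite coef1; case: (n == 0)%N. Qed.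

Lemma nng0 : nng 0.
Proof. by move=> n; rewrite coef0. Qed.

Lemma nngXn k : nng ('X ^+ k).
Proof. elim: k => [|k IH]; [exact: nng1| rewrite exprS; exact: nngM nngX IH]. Qed.

Lemma nngF n : nng (Fp n).
Proof.
elim/ltn_ind: n => -[|[|n]] IH; [exact: nng0 | exact: nng1|].
rewrite FpS2; apply: nngD; first exact: IH.
apply: nngM nngX _; exact: IH.
Qed.
Lemma split_sum (V : nmodType) (T U : finType) (f : U -> T) (finj : injective f)
  (D : {set T}) (hD : f @: setT \subset D) (F : {set T} -> V) :
  \sum_(A : {set T} | A \subset D) F A =
  \sum_(S : {set U}) \sum_(B : {set T} | B \subset D :\: f @: setT) F (f @: S :|: B).
Proof.
rewrite (partition_big (fun A : {set T} => f @^-1: A) (fun _ : {set U} => true)) //=.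
apply: eq_bigr => S _.
rewrite (reindex_onto (fun B : {set T} => f @: S :|: B) (fun A : {set T} => A :\: f @: setT)).
  apply: eq_bigl => B.
  apply/idP/idP.
    case/andP=> /andP[h1 /eqP h2] /eqP h3.
    rewrite -h3; apply/subsetP => x; rewrite !inE => /andP[-> xU].
    by rewrite /=; apply: (subsetP h1); rewrite inE xU.
  move=> hB.
  have hBI : forall x, x \in B -> x \notin f @: setT.
    by move=> x /(subsetP hB); rewrite inE => /andP[].
  apply/andP; split; first (apply/andP; split).
  - apply/subsetP => x; rewrite inE => /orP[/imsetP[y _ ->]|xB].
      by apply: (subsetP hD); apply: imset_f.
    by move: (subsetP hB x xB); rewrite inE => /andP[].
  - apply/eqP/setP => y; rewrite !inE (mem_imset _ _ finj).
    by case: (y \in S) => //=; apply/negP => /hBI; rewrite imset_f.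
  - apply/eqP/setP => x; rewrite !inE.
    case xB: (x \in B); first by rewrite orbT andbT (negPf (hBI x xB)).
    rewrite orbF; case: (boolP (x \in f @: setT)) => [_|xn]; rewrite ?andbF ?andbT //.
    by apply/negP => /imsetP[y _ yx]; move: xn; rewrite yx imset_f.
move=> A /andP[hA /eqP <-].
apply/setP => x; rewrite !inE.
case: (boolP (x \in f @: setT)) => [/imsetP[y _ ->]|xn] /=.
  by rewrite orbF (mem_imset _ _ finj) inE.
case xA: (x \in A); rewrite ?orbT ?orbF //.
by apply/negP => /imsetP[y _ yx]; move: xn; rewrite yx imset_f.
Qed.
Lemma sum_sub1 (V : nmodType) (T : finType) (x : T) (H : {set T} -> V) :
  \sum_(B : {set T} | B \subset [set x]) H B = H set0 + H [set x].
Proof.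
rewrite (eq_bigl (fun B => B \in [set set0; [set x]])); last first.
  by move=> B; rewrite -powerset1 powersetE.
rewrite big_setU1 ?big_set1 //= inE eq_sym.
apply/negP => /eqP/setP/(_ x); by rewrite !inE eqxx.
Qed.

Definition lf n : 'I_n -> 'I_n.+1 := lift ord0.
Arguments lf {n}.
Lemma lfE n (i : 'I_n) : val (lf i) = (val i).+1. Proof. exact: lift0. Qed.
Lemma lf_inj n : injective (@lf n). Proof. exact: lift_inj. Qed.
Lemma lf_neq0 n (i : 'I_n) : (ord0 == lf i) = false. Proof. exact: negPf (neq_lift _ _). Qed.

Lemma split0 (V : nmodType) n (G : {set 'I_n.+1} -> V) :
  \sum_(S : {set 'I_n.+1}) G S =
  \sum_(S : {set 'I_n}) (G (lf @: S) + G (ord0 |: lf @: S)).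
Proof.
rewrite (eq_bigl (fun S : {set 'I_n.+1} => S \subset setT)); last by move=> S; rewrite subsetT.
rewrite (split_sum (@lf_inj n)) ?subsetT //.
have -> : setT :\: lf @: setT = [set ord0 : 'I_n.+1].
  apply/setP => x; rewrite !inE; case: (unliftP ord0 x) => [y ->|->].
    by rewrite (imset_f lf) // eq_sym neq_lift.
  by rewrite eqxx andbT; apply/imsetP => -[y _ /eqP]; rewrite lf_neq0.
apply: eq_bigr => S _; rewrite sum_sub1 setU0; congr (_ + G _); by rewrite setUC.
Qed.

Section Path.
Variable n : nat.
Definition pindep (S : {set 'I_n}) := [forall p in S, forall q in S, (val p).+1 != val q].
Definition nofirst (S : {set 'I_n}) := [forall p in S, val p != 0%N].
Definition haslast (S : {set 'I_n}) := [exists p in S, val p == n.-1].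
End Path.

Definition Ip n : {poly int} := \sum_(S : {set 'I_n} | pindep S) 'X^#|S|.
Definition Ipf n : {poly int} := \sum_(S : {set 'I_n} | pindep S && nofirst S) 'X^#|S|.
Definition Lp n : {poly int} := \sum_(S : {set 'I_n} | pindep S && haslast S) 'X^#|S|.
Definition Lpf n : {poly int} := \sum_(S : {set 'I_n} | [&& pindep S, haslast S & nofirst S]) 'X^#|S|.

Section Lift.
Variable n : nat.
Implicit Type S : {set 'I_n}.
Lemma card_lift S : #|lf @: S| = #|S|.
Proof. by rewrite card_imset //; apply: lf_inj. Qed.
Lemma card_lift1 S : #|ord0 |: lf @: S| = #|S|.+1.
Proof.
rewrite cardsU1 card_lift (_ : ord0 \notin _) //.
by apply/negP => /imsetP[y _ /eqP]; rewrite lf_neq0.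
Qed.
Lemma pindep_lift S : pindep (lf @: S) = pindep S.
Proof.
apply/forallP/forallP => h p.
  apply/implyP => pS; apply/forallP => q; apply/implyP => qS.
  have := h (lf p); rewrite imset_f // => /forallP/(_ (lf q)).
  by rewrite imset_f //= !lfE.
apply/implyP => /imsetP[p' p'S ->]; apply/forallP => q; apply/implyP => /imsetP[q' q'S ->].
by have := h p'; rewrite p'S => /forallP/(_ q'); rewrite q'S /= /bump /= !add1n.
Qed.
Lemma pindep_lift1 S : pindep (ord0 |: lf @: S) = pindep S && nofirst S.
Proof.
apply/idP/andP.
  move=> h; split.
    rewrite -pindep_lift; apply/forallP => p; apply/implyP => pS; apply/forallP => q.
    apply/implyP => qS.
    have := forallP h p; rewrite inE pS orbT /= => /forallP/(_ q).
    by rewrite inE qS orbT.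
  apply/forallP => p; apply/implyP => pS; apply/negP => /eqP p0.
  have := forallP h ord0; rewrite setU11 /= => /forallP/(_ (lf p)).
  by rewrite inE imset_f ?orbT // lfE p0.
case=> hS hf; apply/forallP => p; apply/implyP; rewrite !inE => hp.
apply/forallP => q; apply/implyP; rewrite !inE => hq.
case/orP: hp => [/eqP ->|/imsetP[p' p'S ->]]; case/orP: hq => [/eqP ->|/imsetP[q' q'S ->]] //.
- by rewrite lfE eqSS eq_sym; have := forallP hf q'; rewrite q'S.
- rewrite !lfE /= eqSS.
  by have := forallP hS p'; rewrite p'S /= => /forallP/(_ q'); rewrite q'S.
Qed.
Lemma nofirst_lift S : nofirst (lf @: S).
Proof. by apply/forallP => p; apply/implyP => /imsetP[q _ ->]; rewrite lfE. Qed.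
Lemma nofirst_lift1 S : nofirst (ord0 |: lf @: S) = false.
Proof. by apply/negP => /forallP/(_ ord0); rewrite setU11. Qed.
Lemma haslast_lift S : haslast (lf @: S) = haslast S.
Proof.
apply/existsP/existsP => -[p].
  case/andP => /imsetP[q qS ->]; rewrite lfE /= => /eqP hq.
  by exists q; rewrite qS /=; apply/eqP; rewrite -[in RHS]hq.
case/andP=> pS /eqP hp; exists (lf p); rewrite imset_f // lfE hp /= prednK //.
exact: leq_ltn_trans (leq0n p) (ltn_ord p).
Qed.
Lemma haslast_lift1 S : haslast (ord0 |: lf @: S) = (n == 0)%N || haslast S.
Proof.
rewrite -haslast_lift; apply/existsP/orP.
  case=> p /andP[]; rewrite !inE => /orP[/eqP ->|pS] hp.
    by left; move: hp; rewrite /= eq_sym.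
  by right; apply/existsP; exists p; rewrite pS.
case=> [h|/existsP[p /andP[pS hp]]].
  by exists ord0; rewrite setU11 /= eq_sym.
by exists p; rewrite inE pS orbT.
Qed.
End Lift.

Lemma sum_if_mulX n (P : {set 'I_n} -> bool) :
  \sum_(S : {set 'I_n}) (if P S then 'X^(#|S|.+1) else 0 : {poly int}) =
  'X * \sum_(S : {set 'I_n} | P S) ('X^#|S| : {poly int}).
Proof.
rewrite mulr_sumr [RHS]big_mkcond /=; apply: eq_bigr => S _.
by case: (P S); rewrite ?mulr0 // exprS.
Qed.

Lemma Ip_rec n : Ip n.+1 = Ip n + 'X * Ipf n.
Proof.
rewrite /Ip /Ipf big_mkcond split0 /= big_split /= -sum_if_mulX; congr (_ + _).
  by rewrite [RHS]big_mkcond; apply: eq_bigr => S _; rewrite pindep_lift card_lift.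
by apply: eq_bigr => S _; rewrite pindep_lift1 card_lift1.
Qed.

Lemma Ipf_rec n : Ipf n.+1 = Ip n.
Proof.
rewrite /Ip /Ipf big_mkcond split0 /= [RHS]big_mkcond; apply: eq_bigr => S _.
by rewrite pindep_lift1 nofirst_lift nofirst_lift1 andbF addr0 andbT pindep_lift card_lift.
Qed.

Lemma Lp_rec n : Lp n.+1 = Lp n + 'X * (if n == 0%N then Ipf n else Lpf n).
Proof.
rewrite /Lp /Ipf /Lpf big_mkcond split0 /= big_split /=; congr (_ + _).
  by rewrite [RHS]big_mkcond; apply: eq_bigr => S _; rewrite pindep_lift haslast_lift card_lift.
case: eqP => [->|/eqP n0]; rewrite -sum_if_mulX; apply: eq_bigr => S _;
  rewrite pindep_lift1 haslast_lift1 card_lift1 ?eqxx ?(negPf n0) /=;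
  by case: (pindep S); case: (haslast S); case: (nofirst S).
Qed.

Lemma Lpf_rec n : Lpf n.+1 = Lp n.
Proof.
rewrite /Lp /Lpf big_mkcond split0 /= [RHS]big_mkcond; apply: eq_bigr => S _.
by rewrite nofirst_lift nofirst_lift1 !andbF addr0 !andbT pindep_lift haslast_lift card_lift.
Qed.

Lemma set_I0 (S : {set 'I_0}) : S = set0.
Proof. by apply/setP => -[]. Qed.

Lemma sum_I0 (P : {set 'I_0} -> bool) (F : {set 'I_0} -> {poly int}) :
  \sum_(S : {set 'I_0} | P S) F S = if P set0 then F set0 else 0.
Proof.
rewrite big_mkcond (eq_bigr (fun _ => if P set0 then F set0 else 0)).
  by rewrite (big_pred1 set0) // => S; rewrite /= (set_I0 S) eqxx.
by move=> S _; rewrite (set_I0 S).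
Qed.

Lemma path_closed n :
  [/\ Ip n = Fp n.+2, Ipf n = Fp n.+1, Lp n = 'X * Fp n & Lpf n = 'X * Fp n.-1].
Proof.
elim: n => [|n [h1 h2 h3 h4]].
  rewrite /Ip /Ipf /Lp /Lpf !sum_I0 FpS2 Fp0 Fp1 mulr0 addr0.
  have hp : pindep (set0 : {set 'I_0}) by apply/forallP => -[].
  have hn : nofirst (set0 : {set 'I_0}) by apply/forallP => -[].
  have hl : haslast (set0 : {set 'I_0}) = false by apply/existsP => -[[]].
  by rewrite hp hn hl cards0 expr0.
split.
- by rewrite Ip_rec h1 h2 FpS2.
- by rewrite Ipf_rec h1.
- rewrite Lp_rec h3; case: n {h1 h2 h3 h4} (h2) (h4) => [|m] h2' h4' /=.
    by rewrite h2' Fp0 Fp1 mulr0 add0r.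
  by rewrite h4' /= FpS2 mulrDr.
- by rewrite Lpf_rec h3.
Qed.

Section Sp.
Variables (k : nat) (l : 'I_k -> nat).
Local Notation V := (spider_vertex l).
Arguments spider_adj : simpl never.

Definition legf (m : 'I_k) (p : 'I_(l m)) : V := Some (Tagged (fun m => 'I_(l m)) p).
Arguments legf {m} p : simpl never.
Definition Im (m : 'I_k) : {set V} := @legf m @: setT.

Lemma legf_inj m : injective (@legf m).
Proof.
move=> p q h; have h' : Tagged (fun m => 'I_(l m)) p = Tagged _ q by case: h.
exact: eq_from_Tagged h'.
Qed.

Lemma in_Im m v : (v \in Im m) = (if v is Some u then tag u == m else false).
Proof.
apply/imsetP/idP => [[p _ ->]|]; first by rewrite /legf /= eqxx.
case: v => // -[m' p] /= /eqP e; subst m'; by exists p.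
Qed.

Lemma adj_sym (x y : V) : spider_adj x y = spider_adj y x.
Proof.
rewrite /spider_adj; case: x y => [u|] [w|] //; by rewrite eq_sym orbC.
Qed.

Lemma adj_same m (p q : 'I_(l m)) :
  spider_adj (legf p) (legf q) = ((val p).+1 == val q) || ((val q).+1 == val p).
Proof. by rewrite /spider_adj /legf /= eqxx. Qed.

Lemma adj_diff m m' (p : 'I_(l m)) (q : 'I_(l m')) : m != m' ->
  spider_adj (legf p) (legf q) = false.
Proof. by rewrite /spider_adj /legf /= => /negPf ->. Qed.

Lemma adj_None m (p : 'I_(l m)) : spider_adj None (legf p) = (val p == 0%N).
Proof. by rewrite /spider_adj. Qed.

Lemma adj_other m (p : 'I_(l m)) (v : V) : v \notin Im m -> v != None -> spider_adj (legf p) v = false.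
Proof.
rewrite in_Im; case: v => // u hu _; rewrite /spider_adj /legf /=.
by rewrite eq_sym (negPf hu).
Qed.

Definition cross (A B : {set V}) := [forall x in A, forall y in B, ~~ spider_adj x y].

Lemma indepU A B : independent (A :|: B) = [&& independent A, independent B & cross A B].
Proof.
apply/idP/and3P.
  move=> h; split.
  - apply/forallP => x; apply/implyP => xA; apply/forallP => y; apply/implyP => yA.
    by have := forallP h x; rewrite inE xA /= => /forallP/(_ y); rewrite inE yA.
  - apply/forallP => x; apply/implyP => xA; apply/forallP => y; apply/implyP => yA.
    by have := forallP h x; rewrite inE xA orbT /= => /forallP/(_ y); rewrite inE yA orbT.
  - apply/forallP => x; apply/implyP => xA; apply/forallP => y; apply/implyP => yA.
    by have := forallP h x; rewrite inE xA /= => /forallP/(_ y); rewrite inE yA orbT.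
case=> hA hB hC; apply/forallP => x; apply/implyP; rewrite inE => hx.
apply/forallP => y; apply/implyP; rewrite inE => hy.
case/orP: hx => xA; case/orP: hy => yA.
- by have := forallP hA x; rewrite xA /= => /forallP/(_ y); rewrite yA.
- by have := forallP hC x; rewrite xA /= => /forallP/(_ y); rewrite yA.
- by rewrite adj_sym; have := forallP hC y; rewrite yA /= => /forallP/(_ x); rewrite xA.
- by have := forallP hB x; rewrite xA /= => /forallP/(_ y); rewrite yA.
Qed.

Lemma crossUr A B C : cross A (B :|: C) = cross A B && cross A C.
Proof.
apply/idP/andP.
  move=> h; split; apply/forallP => x; apply/implyP => xA; apply/forallP => y; apply/implyP => yB;
  by have := forallP h x; rewrite xA /= => /forallP/(_ y); rewrite inE yB ?orbT.
case=> h1 h2; apply/forallP => x; apply/implyP => xA; apply/forallP => y; apply/implyP.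
rewrite inE => /orP[] yB.
  by have := forallP h1 x; rewrite xA /= => /forallP/(_ y); rewrite yB.
by have := forallP h2 x; rewrite xA /= => /forallP/(_ y); rewrite yB.
Qed.

Lemma indep_leg m (S : {set 'I_(l m)}) : independent (@legf m @: S) = pindep S.
Proof.
apply/idP/idP => h.
  apply/forallP => p; apply/implyP => pS; apply/forallP => q; apply/implyP => qS.
  have := forallP h (legf p); rewrite imset_f //= => /forallP/(_ (legf q)).
  by rewrite imset_f //= adj_same negb_or => /andP[].
apply/forallP => x; apply/implyP => /imsetP[p pS ->].
apply/forallP => y; apply/implyP => /imsetP[q qS ->].
rewrite adj_same negb_or.
have := forallP h p; rewrite pS /= => /forallP/(_ q); rewrite qS /= => ->.
by have := forallP h q; rewrite qS /= => /forallP/(_ p); rewrite pS /= => ->.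
Qed.

Lemma cross_legs m m' (S : {set 'I_(l m)}) (S' : {set 'I_(l m')}) : m != m' ->
  cross (@legf m @: S) (@legf m' @: S').
Proof.
move=> hm; apply/forallP => x; apply/implyP => /imsetP[p _ ->].
apply/forallP => y; apply/implyP => /imsetP[q _ ->]; by rewrite adj_diff.
Qed.

Lemma cross_rest m (S : {set 'I_(l m)}) (R : {set V}) : [disjoint R & Im m] ->
  cross (@legf m @: S) R = (None \in R) ==> nofirst S.
Proof.
move=> hR; apply/idP/implyP.
  move=> h hN; apply/forallP => p; apply/implyP => pS.
  have := forallP h (legf p); rewrite imset_f //= => /forallP/(_ None); rewrite hN /=.
  by rewrite adj_sym adj_None.
move=> h; apply/forallP => x; apply/implyP => /imsetP[p pS ->].
apply/forallP => y; apply/implyP => yR.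
have yI : y \notin Im m by rewrite (disjointFr hR yR).
case: y yR yI => [u|] yR yI.
  by rewrite adj_other.
by rewrite adj_sym adj_None; have := forallP (h yR) p; rewrite pS.
Qed.

Lemma cards_disjU (A B : {set V}) : [disjoint A & B] -> #|A :|: B| = (#|A| + #|B|)%N.
Proof. by move=> h; rewrite cardsU (disjoint_setI0 h) cards0 subn0. Qed.

Lemma Im_leg m (S : {set 'I_(l m)}) : @legf m @: S \subset Im m.
Proof. by apply: imsetS; apply: subsetT. Qed.

Lemma disj_Im m (A B : {set V}) : A \subset Im m -> [disjoint B & Im m] -> [disjoint A & B].
Proof.
move=> hA hB; rewrite disjoint_subset; apply: (subset_trans hA).
by rewrite -disjoint_subset disjoint_sym.
Qed.

Section Glue.
Variables (i j : 'I_k) (hij : i != j).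
Definition rest : {set V} := setT :\: Im i :\: Im j.
Definition glue (S1 : {set 'I_(l i)}) (S2 : {set 'I_(l j)}) (R : {set V}) :=
  @legf i @: S1 :|: (@legf j @: S2 :|: R).

Lemma rest_disj (R : {set V}) : R \subset rest -> [disjoint R & Im i] /\ [disjoint R & Im j].
Proof.
move=> hR; split; rewrite disjoint_subset; apply: (subset_trans hR);
  apply/subsetP => v; rewrite !inE; by case/andP => // _ /andP[].
Qed.

Lemma indep_glue S1 S2 (R : {set V}) : R \subset rest ->
  independent (glue S1 S2 R) =
  [&& pindep S1, pindep S2, independent R & (None \in R) ==> (nofirst S1 && nofirst S2)].
Proof.
move=> /rest_disj [hi hj].
rewrite /glue indepU indep_leg indepU indep_leg crossUr cross_legs // !cross_rest //.
by case: (pindep S1); case: (pindep S2); case: (independent R); case: (None \in R);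
   case: (nofirst S1); case: (nofirst S2).
Qed.

Lemma card_glue S1 S2 (R : {set V}) : R \subset rest -> #|glue S1 S2 R| = (#|S1| + #|S2| + #|R|)%N.
Proof.
move=> hR; have [hi hj] := rest_disj hR.
rewrite /glue !cards_disjU ?card_imset ?addnA //; try exact: legf_inj.
  by apply: disj_Im (Im_leg _) hj.
apply: (disj_Im (Im_leg S1)); rewrite disjoint_sym disjoint_subset.
apply/subsetP => v; rewrite !inE => vi; apply/negP => /orP[/imsetP[q _ e]|vR].
  by move: vi; rewrite e in_Im /legf /= eq_sym (negPf hij).
by move: vi; rewrite (disjointFr hi vR).
Qed.

Lemma leaf_glue (hi0 : (0 < l i)%N) S1 S2 (R : {set V}) : R \subset rest ->
  (leaf hi0 \in glue S1 S2 R) = haslast S1.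
Proof.
move=> /rest_disj [hi hj].
have -> : leaf hi0 = legf (Ordinal (pred_lt hi0)) by [].
rewrite /glue !inE (mem_imset _ _ (@legf_inj i)).
have -> : (legf (Ordinal (pred_lt hi0)) \in R) = false.
  by apply: (disjointFl hi); rewrite in_Im /legf /=.
have -> : (legf (Ordinal (pred_lt hi0)) \in @legf j @: S2) = false.
  apply/negP => /(subsetP (Im_leg S2)); by rewrite in_Im /legf /= (negPf hij).
rewrite !orbF; apply/idP/existsP => [h|[p /andP[pS /eqP hp]]].
  by exists (Ordinal (pred_lt hi0)); rewrite h /=.
by have -> : Ordinal (pred_lt hi0) = p by apply: val_inj; rewrite /= hp.
Qed.
End Glue.

Lemma sum3 (T1 T2 T3 : finType) (P1 : pred T1) (P2 : pred T2) (D3 Q3 : pred T3)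
  (c1 : T1 -> nat) (c2 : T2 -> nat) (c3 : T3 -> nat) :
  (\sum_(x | D3 x && Q3 x) 'X^(c3 x)) * (\sum_(y | P1 y) 'X^(c1 y)) * (\sum_(z | P2 z) 'X^(c2 z))
  = \sum_y \sum_z \sum_(x | D3 x)
       (if [&& P1 y, P2 z & Q3 x] then 'X^(c1 y + c2 z + c3 x) else 0 : {poly int}).
Proof.
rewrite big_mkcondr /= [\sum_(y | P1 y) _]big_mkcond [\sum_(z | P2 z) _]big_mkcond /=.
set O := \sum_(x | D3 x) _. set L := \sum_y _. set I := \sum_z _.
rewrite (_ : O * L * I = L * (I * O)); last by ring.
rewrite /L mulr_suml; apply: eq_bigr => y _.
rewrite /I mulr_suml mulr_sumr; apply: eq_bigr => z _.
rewrite mulrA mulr_sumr; apply: eq_bigr => x _.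
case: (P1 y); case: (P2 z); case: (Q3 x); by rewrite /= ?mulr0 ?mul0r // -!exprD.
Qed.

Definition Gx (m : 'I_k) (hm : (0 < l m)%N) : {poly int} :=
  \sum_(A : {set V} | independent A && (leaf hm \in A)) 'X^#|A|.

Definition OmN (i j : 'I_k) (b : bool) : {poly int} :=
  \sum_(R : {set V} | [&& R \subset rest i j, independent R & (None \in R) == b]) 'X^#|R|.

Lemma decomp (i j : 'I_k) (hij : i != j) (hi0 : (0 < l i)%N) :
  Gx hi0 = OmN i j false * Lp (l i) * Ip (l j) + OmN i j true * Lpf (l i) * Ipf (l j).
Proof.
rewrite /Gx /OmN /Lp /Ip /Lpf /Ipf !sum3 big_mkcond /=.
rewrite (eq_bigl (fun A : {set V} => A \subset setT)); last by move=> A; rewrite subsetT.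
rewrite (split_sum (@legf_inj i)) ?subsetT //.
rewrite -big_split; apply: eq_bigr => S1 _.
rewrite (split_sum (@legf_inj j)); last first.
  apply/subsetP => v /imsetP[q _ ->]; rewrite !inE in_Im /legf /= eq_sym (negPf hij).
  done.
rewrite -big_split; apply: eq_bigr => S2 _.
rewrite -big_split; apply: eq_bigr => R hR.
have hR' : R \subset rest i j by [].
have := indep_glue hij S1 S2 hR'; have := leaf_glue hij hi0 S1 S2 hR'; have := card_glue hij S1 S2 hR'.
rewrite /glue => -> -> ->.
case: (pindep S1); case: (pindep S2); case: (independent R); case: (None \in R);
  case: (nofirst S1); case: (nofirst S2); case: (haslast S1); by rewrite /= ?addr0 ?add0r.
Qed.

Lemma coef_sumX (T : finType) (P : pred T) (c : T -> nat) n :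
  (\sum_(x | P x) 'X^(c x) : {poly int})`_n = #|[pred x | P x && (c x == n)]|%:R.
Proof.
rewrite coef_sum (eq_bigr (fun x => (c x == n)%:R)); last by move=> x _; rewrite coefXn eq_sym.
rewrite -sumr_const big_mkcond [RHS]big_mkcond /=; apply: eq_bigr => x _.
by rewrite inE; case: (P x); case: (c x == n).
Qed.

Lemma card_coef (m : 'I_k) (hm : (0 < l m)%N) t :
  (Gx hm)`_t = #|istar t (leaf hm)|%:R.
Proof.
rewrite /Gx coef_sumX; congr (_%:R); apply: eq_card => A.
by rewrite !inE; case: (independent A); case: (leaf hm \in A); case: (#|A| == t).
Qed.

Lemma rest_sym i j : rest i j = rest j i.
Proof. by apply/setP => v; rewrite !inE andbCA. Qed.

Lemma OmN_sym i j b : OmN i j b = OmN j i b.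
Proof. by rewrite /OmN rest_sym. Qed.

Lemma indep_sub (A B : {set V}) : A \subset B -> independent B -> independent A.
Proof.
move=> hAB hB; apply/forallP => x; apply/implyP => xA; apply/forallP => y; apply/implyP => yA.
by have := forallP hB x; rewrite (subsetP hAB x xA) /= => /forallP/(_ y); rewrite (subsetP hAB y yA).
Qed.

Lemma nng_ON i j : nng ('X * OmN i j false - OmN i j true).
Proof.
move=> n; rewrite coefB coefXM /OmN !coef_sumX subr_ge0.
have hle : forall n', (#|[pred R : {set V} | [&& R \subset rest i j, independent R & (None \in R) == true] && (#|R| == n')]|
   <= #|[pred R : {set V} | [&& R \subset rest i j, independent R & (None \in R) == false] && (#|R| == n'.-1)]|)%N.
  move=> n'.
  rewrite -(card_in_imset (f := fun R : {set V} => R :\ None)); last first.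
    move=> R1 R2; rewrite !inE => /andP[/and3P[_ _ /eqP h1] _] /andP[/and3P[_ _ /eqP h2] _] e.
    by rewrite -(setD1K h1) -(setD1K h2) e.
  apply: subset_leq_card; apply/subsetP => R' /imsetP[R]; rewrite !inE.
  case/andP => /and3P[h1 h2 /eqP h3] /eqP h4 ->.
  rewrite setD11 /= (subset_trans (subD1set _ _) h1) (indep_sub (subD1set _ _) h2) /=.
  by rewrite -h4 (cardsD1 None R) h3.
case: n => [|n] /=.
  have -> : #|[pred R : {set V} | [&& R \subset rest i j, independent R & (None \in R) == true] && (#|R| == 0%N)]| = 0%N.
    apply: eq_card0 => R; rewrite !inE; apply/negP => /andP[/and3P[_ _ /eqP h] /eqP c].
    by move: c; rewrite (cardsD1 None R) h.
  by [].
by rewrite ler_nat (hle n.+1).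
Qed.
End Sp.

Lemma Gx_diff k (l : 'I_k -> nat) (i j : 'I_k) (hij : i != j) (hi : (0 < l i)%N) (hj : (0 < l j)%N) :
  (l i <= l j)%N ->
  (Gx hi - Gx hj = 'X * (- 'X) ^+ (l i).-1 * Fp (l j - l i) * ('X * OmN l i j false - OmN l i j true))%R.
Proof.
move=> hab.
have hji : j != i by rewrite eq_sym.
rewrite (decomp hij hi) (decomp hji hj) !(OmN_sym l j i).
have [h1 h2 h3 h4] := path_closed (l i).
have [h1' h2' h3' h4'] := path_closed (l j).
rewrite h1 h2 h3 h4 h1' h2' h3' h4'.
have [a' ea] : exists a', l i = a'.+1 by exists (l i).-1; rewrite prednK.
have [d eb] : exists d, l j = (l i + d)%N by exists (l j - l i)%N; rewrite subnKC.
have ed : (l j - l i)%N = d by rewrite eb addKn.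
rewrite ed eb ea.
exact: (diff_id _ _ a' d).
Qed.

Lemma exprNX (n : nat) : ((- 'X) ^+ n = if odd n then - 'X ^+ n else 'X ^+ n :> {poly int})%R.
Proof. by rewrite exprNn -signr_odd; case: (odd n); rewrite ?expr1 ?expr0 ?mulN1r ?mul1r. Qed.

Close Scope ring_scope.
Theorem theorem2p3 (k : nat) (l : 'I_k -> nat) (lpos : forall i, 0 < l i)
  (hk : 1 <= k) (hord : spider_order l) (t : nat)
  (ht1 : 1 <= t) (ht2 : t <= spider_alpha l) :
  forall i j : 'I_k, i < j ->
    #|istar t (leaf (lpos j))| <= #|istar t (leaf (lpos i))|.
Proof.
move=> i j hlt.
have hij : i != j by apply/eqP => e; move: hlt; rewrite e ltnn.
have hji : j != i by rewrite eq_sym.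
rewrite -(ler_nat int) -!card_coef -subr_ge0 -coefB.
suff : nng (Gx (lpos i) - Gx (lpos j)) by apply.
have caseA : (l i <= l j) && odd (l i) -> nng (Gx (lpos i) - Gx (lpos j)).
  case/andP => hab ho; rewrite (Gx_diff hij) // exprNX.
  have -> : odd (l i).-1 = false by move: ho; case: (l i) => //= n; case: (odd n).
  apply: nngM; last exact: nng_ON.
  by apply: nngM; [apply: nngM nngX (nngXn _) | apply: nngF].
have caseB : (l j <= l i) && ~~ odd (l j) -> nng (Gx (lpos i) - Gx (lpos j)).
  case/andP => hab ho.
  rewrite -[(Gx (lpos i) - _)%R]opprK opprB (Gx_diff hji) // exprNX !(OmN_sym l j i).
  have -> : odd (l j).-1 = true by move: ho (lpos j); case: (l j) => //= n; case: (odd n).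
  rewrite !(mulNr, mulrN) opprK.
  apply: nngM; last exact: nng_ON.
  by apply: nngM; [apply: nngM nngX (nngXn _) | apply: nngF].
have [o1 o2 o3] := hord i j.
have [p1 p2 p3] := hord j i.
case oi: (odd (l i)); case oj: (odd (l j)).
- apply: caseA; rewrite oi andbT; case: (leqP (l i) (l j)) => // h.
  by move: (p1 oj oi h); rewrite ltnNge (ltnW hlt).
- case: (leqP (l i) (l j)) => h; first by apply: caseA; rewrite h oi.
  by apply: caseB; rewrite (ltnW h) oj.
- by move: (p3 oj (negbT oi)); rewrite ltnNge (ltnW hlt).
- apply: caseB; rewrite oj andbT; case: (leqP (l j) (l i)) => // h.
  by move: (o2 (negbT oi) (negbT oj) h); rewrite ltnNge (ltnW hlt).
Qed.
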